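(* Let $G$ be a sub-amply regular graph with parameters $(n,k,\lambda,\mu)$ which is not a disjoint union of cliques. Then \[ \lambda + 1 < \max\left\{4\sqrt{2n},\ \frac{6}{\sqrt{13}-1}\sqrt{k(\mu-1)}\right\}. \]
   Context: A graph is sub-amply regular with parameters $(n,k,\lambda,\mu)$ if it has $n$ vertices, is $k$-regular, any two adjacent vertices have exactly $\lambda$ common neighbors, and any two vertices at distance two from each other have at most $\mu$ common neighbors. *)

(* Defs.v *)
From mathcomp Require Import all_boot all_order all_algebra.
Set Implicit Arguments. Unset Strict Implicit. Unset Printing Implicit Defensive.

Definition simple_graph (T : finType) (e : rel T) : Prop :=
  symmetric e /\ irreflexive e.

Definition nbhd (T : finType) (e : rel T) (x : T) : {set T} := [set y | e x y].

Definition common_nbrs (T : finType) (e : rel T) (x y : T) : nat :=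
  #|nbhd e x :&: nbhd e y|.

Definition dist2 (T : finType) (e : rel T) (x y : T) : bool :=
  [&& x != y, ~~ e x y & [exists z, e x z && e z y]].

Definition sub_amply_regular (T : finType) (e : rel T) (n k lam mu : nat) : Prop :=
  [/\ simple_graph e,
      #|T| = n,
      (forall x : T, #|nbhd e x| = k),
      (forall x y : T, e x y -> common_nbrs e x y = lam) &
      (forall x y : T, dist2 e x y -> common_nbrs e x y <= mu)%N].

Definition disjoint_union_of_cliques (T : finType) (e : rel T) : Prop :=
  forall x y z : T, e x y -> e y z -> x != z -> e x z.

(* Main.v *)
Require Import Defs.
From mathcomp Require Import all_boot all_order all_algebra.
From mathcomp Require Import zify.
Set Implicit Arguments. Unset Strict Implicit. Unset Printing Implicit Defensive.

Lemma ar_Ct (a b c d lam : nat) : a = 1 + b -> d + c = b -> a = lam -> c + d + 1 = lam.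
Proof. lia. Qed.
Lemma ar_sO (u i x y b s lam : nat) : u + i = x + y -> b <= 1 -> lam <= b + u -> s + x + 1 = lam -> s <= y.
Proof. lia. Qed.
Lemma ar_s (a mu : nat) : 1 + a <= mu -> a <= mu - 1.
Proof. lia. Qed.
Lemma ar_pair (z g x1 u1 y1 b c d C lam sw sw' mu : nat) : z <= g -> g + x1 = u1 + d ->
  u1 + y1 = b + c -> C = 2 + z -> C = lam -> b + 1 <= sw -> c + 1 <= sw' -> d + 2 <= mu ->
  lam.+2 <= sw + sw' + mu.
Proof. lia. Qed.

Lemma ar_h (l m x : nat) : l <= x + m -> l - m <= x.
Proof. lia. Qed.
Lemma ar_k (h l lam : nat) : h + l = lam -> lam.+2 - (2 + l) = h.
Proof. lia. Qed.
Lemma ar_l (sa sb mu lam : nat) : 2*sa+mu < lam.+2 -> 2*sb + mu < lam.+2 -> lam.+2 <= sa + sb + mu -> False.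
Proof. lia. Qed.

Lemma ar_c1 (g lam mu a b c : nat) : lam + mu + 3 <= 2 * g -> a + b <= lam.+2 + c ->
  g <= a -> g <= b -> c <= mu -> False.
Proof. lia. Qed.
Lemma ar_c2 (g a b : nat) : g <= a -> a = 1 + b -> g - 1 <= b.
Proof. lia. Qed.

Lemma ar_k1 (a c K k : nat) : a + c = k -> a <= K -> k + 1 - (true + K) <= c.
Proof. lia. Qed.

Lemma ar_4P (P L D : nat) : 0 < L -> 4 * (P * (L + D)) <= L ^ 2 -> 4 * P <= L.
Proof.
move=> hL h.
have : 4 * P * L <= L * L.
  apply: leq_trans _ (leq_trans h _); last by rewrite expnS expn1.
  by rewrite -mulnA leq_mul2l leq_mul2l leq_addr !orbT.
by rewrite leq_pmul2r.
Qed.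

Lemma ar_d (lam mu k : nat) : 4 * ((mu - 1) * k) <= lam.+1 ^ 2 -> lam.+1 <= k ->
  2*lam + 3 <= k + mu -> 1 <= mu ->
  0 < lam.+2 - mu /\ 2 * (2 * ((mu - 1) * (k - lam.+1))) < (lam.+2 - mu) * (lam.+2 - mu).
Proof.
move=> h1 h2 h3 h4.
have [P eP] : exists P, mu = P.+1 by exists mu.-1; lia.
have [D eD] : exists D, k = lam.+1 + D by exists (k - lam.+1); lia.
subst mu k.
have e1 : P.+1 - 1 = P by lia.
rewrite e1 in h1 *.
have e2 : lam.+1 + D - lam.+1 = D by lia.
rewrite e2.
have hP := @ar_4P P lam.+1 D (ltn0Sn lam) h1.
have [R eR] : exists R, lam.+1 = P + R.+1 by exists (lam.+1 - P).-1; lia.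
have e3 : lam.+2 - P.+1 = R.+1 by lia.
rewrite e3; split; first by [].
rewrite eR in h1; rewrite expnS expn1 in h1.
nia.
Qed.

Lemma ar_H (H d X lam mu : nat) : H * d <= X -> 2 * X < d * d -> d = lam.+2 - mu -> 0 < d ->
   lam + mu + 3 <= 2 * (lam.+2 - H).
Proof.
move=> h1 h2 h3 h4.
have : (2 * H) * d < d * d.
  rewrite -mulnA; apply: leq_ltn_trans h2; by rewrite leq_mul2l h1 orbT.
rewrite ltn_pmul2r // => h5; lia.
Qed.

Lemma ar_final (lam mu k n g K : nat) : g <= K -> K <= lam.+2 ->
  K * (k + 1 - K) * (g - 1) <= n * k -> 32 * n <= lam.+1 ^ 2 ->
  lam + mu + 3 <= 2 * g -> 2*lam + 3 <= k + mu -> 4 * ((mu - 1) * k) <= lam.+1 ^ 2 ->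
  1 <= mu -> lam.+1 <= k -> False.
Proof.
move=> h1 h2 h3 h4 h5 h6 h7 h8 h9.
have [P eP] : exists P, mu = P.+1 by exists mu.-1; lia.
have [D eD] : exists D, k = lam.+1 + D by exists (k - lam.+1); lia.
have [L eL] : exists L, L = lam.+1 by exists lam.+1.
subst mu k.
have e1 : P.+1 - 1 = P by lia.
rewrite e1 in h7.
rewrite -eL in h3 h4 h7 h9.
have hP := @ar_4P P L D ltac:(lia) h7.
have hPD : L <= D + P by lia.
have hDg : D * (g * (g - 1)) <= n * (L + D).
  apply: leq_trans h3.
  rewrite mulnA [D * g]mulnC; apply: leq_mul => //; apply: leq_mul => //; lia.
have hg : L + 3 <= 2 * g by lia.
have hg1 : L + 1 <= 2 * (g - 1) by lia.
have h4g : (L + 3) * (L + 1) <= 4 * (g * (g - 1)).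
  have := leq_mul hg hg1; rewrite mulnACA; by [].
have hmain : D * (8 * ((L + 3) * (L + 1))) <= L * L * (L + D).
  apply: (@leq_trans (D * (32 * (g * (g - 1))))).
    rewrite leq_mul2l; apply/orP; right.
    move: h4g; move: ((L + 3) * (L + 1)) (g * (g - 1)) => x y; lia.
  rewrite mulnCA.
  apply: (@leq_trans (32 * (n * (L + D)))); first by rewrite leq_mul2l hDg orbT.
  rewrite mulnA leq_mul2r; apply/orP; right; by rewrite mulnn.
have h3L : 3 * L <= 4 * D by lia.
have hL : 0 < L by lia.
have p1 := leq_mul (leq_mul h3L (leqnn L)) (leqnn L).
have hA : 0 < L * L * L by rewrite !muln_gt0 hL.
lia.
Qed.

Lemma ar_hk (a b k : nat) : a <= b -> k = 1 + b -> a.+1 <= k.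
Proof. lia. Qed.
Lemma ar_2l (u i A B z k lam mu : nat) : u + i = A + B -> A = lam -> B = lam -> u <= z ->
  k = 1 + (1 + z) -> 1 + i <= mu -> 2 * lam + 3 <= k + mu.
Proof. lia. Qed.
Lemma ar_g (lam K H c : nat) : lam.+2 - K <= H -> K <= c -> lam.+2 - H <= c.
Proof. lia. Qed.

Section Comb.
Variables (T : finType) (e : rel T) (n k lam mu : nat).
Hypothesis esym : symmetric e.
Hypothesis eirr : irreflexive e.
Hypothesis Hdeg : forall x : T, #|nbhd e x| = k.
Hypothesis Hlam : forall x y : T, e x y -> common_nbrs e x y = lam.
Hypothesis Hcard : #|T| = n.
Hypothesis Hmu : forall x y : T, dist2 e x y -> common_nbrs e x y <= mu.

Local Notation N := (nbhd e).

Lemma inN x y : (y \in N x) = e x y.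
Proof. by rewrite inE. Qed.

Lemma notinN x : x \notin N x.
Proof. by rewrite inN eirr. Qed.

Definition cliqueb (K : {set T}) :=
  [forall a in K, forall b in K, (a != b) ==> e a b].

Lemma cliqueP (K : {set T}) : reflect (forall a b, a \in K -> b \in K -> a != b -> e a b) (cliqueb K).
Proof.
apply: (iffP forallP) => [H a b aK bK ab | H a].
  by move: (H a); rewrite aK /= => /forallP/(_ b); rewrite bK ab.
apply/implyP => aK; apply/forallP => b; apply/implyP => bK; apply/implyP.
exact: H.
Qed.

Lemma dist2_mu x b (S : {set T}) z :
  x != b -> ~~ e x b -> z \in S -> S \subset N x :&: N b -> #|S| <= mu.
Proof.
move=> xb nxb zS sub.
have Hd : dist2 e x b.
  apply/and3P; split => //; apply/existsP; exists z.
  by move/subsetP: sub => /(_ z zS); rewrite !inE => /andP[-> ]; rewrite esym.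
apply: leq_trans (Hmu Hd); exact: subset_leq_card.
Qed.

Lemma clique_union (A B : {set T}) a b :
  cliqueb A -> cliqueb B -> a \in A :&: B -> b \in A :&: B -> a != b ->
  #|A| + #|B| <= lam.+2 + #|A :&: B|.
Proof.
move=> /cliqueP cA /cliqueP cB; rewrite !inE => /andP[aA aB] /andP[bA bB] ab.
rewrite -cardsUI leq_add2r.
have sub : A :|: B \subset a |: (b |: (N a :&: N b)).
  apply/subsetP => x; rewrite !inE => Hx.
  case: (eqVneq x a) => //= xa; case: (eqVneq x b) => //= xb.
  case/orP: Hx => Hx.
    by rewrite (cA a x aA Hx) ?(cA b x bA Hx) // eq_sym.
  by rewrite (cB a x aB Hx) ?(cB b x bB Hx) // eq_sym.
apply: leq_trans (subset_leq_card sub) _.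
rewrite !cardsU1.
have := Hlam (cA a b aA bA ab); rewrite /common_nbrs => ->.
have h1 := leq_b1 (a \notin b |: (N a :&: N b)).
have h2 := leq_b1 (b \notin N a :&: N b); lia.
Qed.

Lemma clique_le (K : {set T}) a b : cliqueb K -> a \in K -> b \in K -> a != b -> #|K| <= lam.+2.
Proof.
move=> cK aK bK ab.
have := clique_union cK cK (a:=a) (b:=b); rewrite setIid => /(_ aK bK ab).
lia.
Qed.


Definition maxcliqueb (K : {set T}) :=
  cliqueb K && [forall w, (w \notin K) ==> [exists b in K, ~~ e w b]].

Lemma extend (K0 : {set T}) : cliqueb K0 -> exists K, maxcliqueb K /\ K0 \subset K.
Proof.
move=> cK0.
pose P := (fun K : {set T} => cliqueb K && (K0 \subset K)).
have P0 : P K0 by rewrite /P cK0 subxx.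
case: (@arg_maxnP _ K0 P (fun K : {set T} => #|K|) P0) => K /andP[cK sK] Hmax.
exists K; split => //; apply/andP; split => //.
apply/forallP => w; apply/implyP => wK.
case: (boolP [exists b in K, ~~ e w b]) => // /negP Hn.
have Hall : forall b, b \in K -> e w b.
  move=> b bK; apply/negPn/negP => nwb; apply: Hn; apply/existsP; exists b.
  by rewrite bK.
exfalso.
have cK' : cliqueb (w |: K).
  apply/cliqueP => a b; rewrite !inE => /orP[/eqP->|aK] /orP[/eqP->|bK] ab.
  - by rewrite eqxx in ab.
  - exact: Hall.
  - by rewrite esym; apply: Hall.
  - by move/cliqueP: cK; apply.
have := Hmax (w |: K); rewrite /P cK' /= (subset_trans sK (subsetUr _ _)) => /(_ isT).
by rewrite cardsU1 wK add1n ltnn.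
Qed.

Lemma card_sum (A : {set T}) (P : pred T) : #|[set b in A | P b]| = \sum_(b in A) P b.
Proof.
rewrite -sum1_card big_mkcond /= [RHS]big_mkcond /=.
apply: eq_bigr => b _; rewrite inE; by case: (b \in A); case: (P b).
Qed.

Lemma dcount (A B : {set T}) (r : T -> T -> bool) :
  \sum_(a in A) #|[set b in B | r a b]| = \sum_(b in B) #|[set a in A | r a b]|.
Proof.
under eq_bigr do rewrite card_sum.
rewrite exchange_big /=; apply: eq_bigr => b _; by rewrite card_sum.
Qed.

Lemma sum_disj (J S : {set T}) (F : T -> {set T}) :
  (forall q, q \in J -> F q \subset S) ->
  (forall q q' x, q \in J -> q' \in J -> x \in F q -> x \in F q' -> q = q') ->
  \sum_(q in J) #|F q| <= #|S|.
Proof.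
move=> Hs Hd.
have E : forall q, q \in J -> #|F q| = #|[set x in S | (fun q x => x \in F q) q x]|.
  move=> q qJ; apply: eq_card => x; rewrite inE.
  by case xF: (x \in F q); rewrite ?andbT ?andbF // (subsetP (Hs q qJ)).
rewrite (eq_bigr _ E) dcount -sum1_card; apply: leq_sum => x xS.
apply/card_le1_eqP => q q'; rewrite !inE => /andP[qJ xq] /andP[q'J xq'].
by rewrite (Hd q q' x qJ q'J xq xq').
Qed.


Lemma commonE x y : common_nbrs e x y = #|N x :&: N y|.
Proof. by []. Qed.

Lemma big_clique u v : e u v -> exists K, [/\ cliqueb K, u \in K, v \in K &
   (lam.+2 - #|K|) * (lam.+2 - mu) <= 2 * ((mu - 1) * (k - lam.+1))].
Proof.
move=> euv.
set C := N u :&: N v.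
have cardC : #|C| = lam by rewrite -commonE Hlam.
have uC : u \notin C by rewrite !inE eirr.
have vC : v \notin C by rewrite !inE eirr andbF.
have CP : forall w, w \in C -> e u w /\ e v w.
  by move=> w; rewrite !inE => /andP[-> ->].
pose s w := #|(C :\ w) :\: N w|.
pose O := N u :\: (v |: C).
have cardO : #|O| = k - lam.+1.
  have sub : v |: C \subset N u.
    apply/subsetP => x; rewrite !inE => /orP[/eqP->|/andP[] //]; by [].
  rewrite /O cardsD (setIidPr sub) Hdeg cardsU1 vC cardC.
  by rewrite add1n.
have Ct : forall w, w \in C -> s w + #|C :&: N w| + 1 = lam.
  move=> w wC.
  have E1 : #|C| = 1 + #|C :\ w| by rewrite (cardsD1 w C) wC.
  have E2 := cardsID (N w) (C :\ w).
  have E3 : (C :\ w) :&: N w = C :&: N w.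
    apply/setP => x; rewrite !inE; case: (eqVneq x w) => //= ->.
    by rewrite eirr !andbF.
  rewrite E3 in E2; exact: (ar_Ct E1 E2 cardC).
have sO : forall w, w \in C -> s w <= #|[set o in O | e w o]|.
  move=> w wC; have := Ct w wC; have [euw evw] := CP w wC.
  have Hl : #|N w :&: N u| = lam by rewrite -commonE Hlam // esym.
  have sub : N w :&: N u \subset v |: ((C :&: N w) :|: [set o in O | e w o]).
    apply/subsetP => x; rewrite !inE => /andP[ewx eux].
    case: (eqVneq x v) => //= xv.
    case evx: (e v x); by rewrite ?ewx ?eux ?evx ?xv.
  have := subset_leq_card sub; rewrite cardsU1 Hl.
  have := leq_b1 (v \notin (C :&: N w) :|: [set o in O | e w o]).
  have := cardsUI (C :&: N w) [set o in O | e w o].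
  exact: ar_sO.
have sumS : \sum_(w in C) s w <= (mu - 1) * (k - lam.+1).
  apply: (@leq_trans (\sum_(w in C) #|[set o in O | e w o]|)); first exact: leq_sum.
  rewrite dcount -cardO mulnC -sum_nat_const; apply: leq_sum => o oO.
  move: oO; rewrite !inE negb_or => /andP[/andP[ov oC] euo].
  rewrite euo /= esym in oC.
  have Hs := @dist2_mu o v (u |: [set w in C | e w o]) u ov oC.
  have : #|u |: [set w in C | e w o]| <= mu.
    apply: Hs; first by rewrite !inE eqxx.
    apply/subsetP => x; rewrite !inE => /orP[/eqP->|/andP[xC exo]].
      by rewrite (esym o u) euo (esym v u) euv.
    case/andP: xC => _ evx; by rewrite (esym o x) exo evx.
  rewrite cardsU1 inE (negbTE uC) /=; exact: ar_s.
have pair : forall w w', w \in C -> w' \in C -> w != w' -> ~~ e w w' ->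
    lam.+2 <= s w + s w' + mu.
  move=> w w' wC w'C ww' nww'.
  have [euw evw] := CP w wC; have [euw' evw'] := CP w' w'C.
  clearbody C.
  set Z := (C :\ w) :\ w'.
  have ZE : forall x, (x \in Z) = [&& x != w', x != w & x \in C].
    by move=> x; rewrite /Z !in_setD1.
  clearbody Z.
  have NE : forall a x, (x \in N a) = e a x by move=> a x; rewrite inE.
  have cZ : #|C| = 2 + #|Z|.
    rewrite (cardsD1 w C) wC (cardsD1 w' (C :\ w)) in_setD1 eq_sym ww' w'C /=.
    have -> : C :\ w :\ w' = Z by apply/setP => x; rewrite ZE !in_setD1.
    by rewrite add1n add1n.
  have sub : Z \subset (Z :\: N w) :|: (Z :\: N w') :|: (Z :&: (N w :&: N w')).
    apply/subsetP => x xZ; rewrite !in_setU !in_setD !in_setI xZ /=.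
    by case: (x \in N w); case: (x \in N w').
  have c1 : #|Z :\: N w| + 1 <= s w.
    have sb : w' |: (Z :\: N w) \subset (C :\ w) :\: N w.
      apply/subsetP => x; rewrite !inE ZE => /orP[/eqP->|].
        by rewrite w'C eq_sym ww' nww'.
      by case/andP => -> /and3P[_ -> ->].
    have := subset_leq_card sb; rewrite cardsU1 in_setD ZE eqxx andbF /= => h; rewrite addn1; exact: h.
  have c2 : #|Z :\: N w'| + 1 <= s w'.
    have sb : w |: (Z :\: N w') \subset (C :\ w') :\: N w'.
      apply/subsetP => x; rewrite !inE ZE => /orP[/eqP->|].
        by rewrite wC ww' esym nww'.
      by case/andP => -> /and3P[-> _ ->].
    have := subset_leq_card sb; rewrite cardsU1 in_setD ZE eqxx !andbF /= add1n addn1; exact.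
  have c3 : #|Z :&: (N w :&: N w')| + 2 <= mu.
    have Hs := @dist2_mu w w' (u |: (v |: (Z :&: (N w :&: N w')))) u ww' nww'.
    have : #|u |: (v |: (Z :&: (N w :&: N w')))| <= mu.
      apply: Hs; first by rewrite !in_setU1 eqxx.
      apply/subsetP => x; rewrite !in_setU1 !in_setI => /orP[/eqP->|/orP[/eqP->|]].
      - by rewrite !NE !(esym _ u) euw euw'.
      - by rewrite !NE !(esym _ v) evw evw'.
      - by case/andP => _ /andP[-> ->].
    have uv : u != v by apply/negP => /eqP uv; rewrite uv eirr in euv.
    have uZ : u \notin Z by rewrite ZE (negbTE uC) !andbF.
    have vZ : v \notin Z by rewrite ZE (negbTE vC) !andbF.
    rewrite !cardsU1 !in_setU1 !in_setI (negbTE uv) /=.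
    rewrite (negbTE uZ) (negbTE vZ) /= add1n add1n addn2; exact.
  have H1 := subset_leq_card sub.
  have H2 := cardsUI (Z :\: N w :|: Z :\: N w') (Z :&: (N w :&: N w')).
  have H3 := cardsUI (Z :\: N w) (Z :\: N w').
  exact: (ar_pair H1 H2 H3 cZ cardC c1 c2 c3).
clearbody C.
pose Light := [set w in C | 2 * s w + mu < lam.+2].
have LC : Light \subset C by apply/subsetP => x; rewrite inE => /andP[].
pose K0 := u |: (v |: Light).
have cK0 : cliqueb K0.
  apply/cliqueP => a b; rewrite !inE.
  move=> /orP[/eqP->|/orP[/eqP->|/andP[aC aL]]] /orP[/eqP->|/orP[/eqP->|/andP[bC bL]]] ab.
  all: try by rewrite eqxx in ab.
  - done.
  - by case: (CP b bC).
  - by rewrite esym.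
  - by case: (CP b bC).
  - by case: (CP a aC) => ? _; rewrite esym.
  - by case: (CP a aC) => _ ?; rewrite esym.
  - apply/negPn/negP => nab; have := pair a b aC bC ab nab.
    move=> h; exfalso; exact: (ar_l aL bL h).
have uv : u != v by apply/negP => /eqP uv; rewrite uv eirr in euv.
have cardK0 : #|K0| = 2 + #|Light|.
  have uL : u \notin Light by apply/negP => /(subsetP LC); rewrite (negbTE uC).
  have vL : v \notin Light by apply/negP => /(subsetP LC); rewrite (negbTE vC).
  by rewrite /K0 !cardsU1 !in_setU1 (negbTE uv) (negbTE uL) (negbTE vL).
have cardH : #|C :\: Light| + #|Light| = lam.
  by rewrite cardsD (setIidPr LC) subnK ?cardC // -cardC subset_leq_card.
have Hheavy : #|C :\: Light| * (lam.+2 - mu) <= 2 * \sum_(w in C) s w.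
  rewrite -sum_nat_const big_distrr /=.
  rewrite [X in _ <= X](big_setID Light) /=.
  apply: leq_trans (leq_addl _ _).
  apply: leq_sum => w; rewrite !inE => /andP[wL wC]; rewrite wC /= -leqNgt in wL.
  exact: ar_h.
exists K0; split => //; first by rewrite !inE eqxx.
  by rewrite !inE eqxx orbT.
rewrite cardK0 (ar_k cardH).
apply: (leq_trans Hheavy); rewrite leq_mul2l; by rewrite sumS orbT.
Qed.


Lemma core (g : nat) (K : {set T}) w :
  (forall u v, e u v -> exists M, [/\ maxcliqueb M, u \in M, v \in M & g <= #|M|]) ->
  lam + mu + 3 <= 2 * g ->
  maxcliqueb K -> g <= #|K| -> w \notin K -> #|N w :&: K| * (g - 1) <= k.
Proof.
move=> Hg H2 mK gK wK.
have /andP[cK mxK] := mK.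
set J := N w :&: K.
have JE : forall x, (x \in J) = e w x && (x \in K) by move=> x; rewrite !inE.
clearbody J.
case: (set_0Vmem J) => [-> |[q0 q0J]]; first by rewrite cards0.
have := forallP mxK w; rewrite wK /= => /existsP[b /andP[bK nwb]].
have wb : w != b by apply/negP => /eqP wb; rewrite wb bK in wK.
have Jmu : #|J| <= mu.
  apply: (@dist2_mu w b J q0 wb nwb q0J).
  apply/subsetP => x; rewrite JE !inE => /andP[ewx xK]; rewrite ewx /=.
  have xb : x != b by apply/negP => /eqP xb; rewrite -xb ewx in nwb.
  by rewrite esym; move/cliqueP: cK; apply.
pose goodM q (M : {set T}) := [&& maxcliqueb M, w \in M, q \in M & g <= #|M|].
pose M q := odflt set0 [pick M | goodM q M].
have MP : forall q, q \in J -> goodM q (M q).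
  move=> q; rewrite JE => /andP[ewq _]; rewrite /M.
  case: pickP => [M' //|none]; exfalso.
  have [M' [mM wM qM gM]] := Hg w q ewq.
  by have := none M'; rewrite /goodM mM wM qM gM.
have Mcl : forall q, q \in J -> cliqueb (M q).
  by move=> q qJ; case/and4P: (MP q qJ) => /andP[].
have notin : forall q q', q \in J -> q' \in J -> q != q' -> q' \notin M q.
  move=> q q' qJ q'J qq'; apply/negP => q'M.
  case/and4P: (MP q qJ) => _ wM qM gM.
  have qK : q \in K by move: qJ; rewrite JE => /andP[].
  have q'K : q' \in K by move: q'J; rewrite JE => /andP[].
  have H := @clique_union (M q) K q q' (Mcl q qJ) cK.
  rewrite !inE qM qK q'M q'K /= in H; have {}H := H isT isT qq'.
  have sub : M q :&: K \subset J.
    apply/subsetP => x; rewrite !inE JE => /andP[xM xK]; rewrite xK andbT.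
    have xw : w != x by apply/negP => /eqP xw; rewrite xw xK in wK.
    by move/cliqueP: (Mcl q qJ); apply.
  exact: (ar_c1 H2 H gM gK (leq_trans (subset_leq_card sub) Jmu)).
have disj : forall q q' x, q \in J -> q' \in J -> x \in M q :\ w -> x \in M q' :\ w -> q = q'.
  move=> q q' x qJ q'J; rewrite !in_setD1 => /andP[xw xM] /andP[_ xM'].
  apply/eqP/negPn/negP => qq'.
  case/and4P: (MP q qJ) => _ wM qM gM.
  case/and4P: (MP q' q'J) => /andP[cM' mxM'] wM' q'M' gM'.
  have H := @clique_union (M q) (M q') w x (Mcl q qJ) (Mcl q' q'J).
  rewrite !inE wM wM' xM xM' /= eq_sym xw in H; have {}H := H isT isT isT.
  have qM' : q \notin M q' by apply: notin => //; rewrite eq_sym.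
  have := forallP mxM' q; rewrite qM' /= => /existsP[b' /andP[b'M nqb']].
  have qb' : q != b' by apply/negP => /eqP qb'; rewrite qb' b'M in qM'.
  have b'Mq : b' \notin M q.
    apply/negP => b'Mq; move/negP: nqb'; apply.
    by move/cliqueP: (Mcl q qJ); apply.
  have sub : M q :&: M q' \subset N q :&: N b'.
    apply/subsetP => y; rewrite !inE => /andP[yM yM'].
    have qy : q != y by apply/negP => /eqP qy; rewrite qy yM' in qM'.
    have yb : y != b' by apply/negP => /eqP yb; rewrite -yb yM in b'Mq.
    rewrite (cliqueP _ (Mcl q qJ) q y qM yM qy) /= esym.
    by move/cliqueP: cM'; apply.
  have wI : w \in M q :&: M q' by rewrite inE wM wM'.
  have := @dist2_mu q b' (M q :&: M q') w qb' nqb' wI sub.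
  by move=> h; exact: (ar_c1 H2 H gM gM' h).
have Hsum := @sum_disj J (N w) (fun q => M q :\ w) _ disj.
rewrite Hdeg in Hsum.
apply: leq_trans (Hsum _).
  rewrite -sum_nat_const; apply: leq_sum => q qJ.
  case/and4P: (MP q qJ) => _ wM _ gM.
  apply: ar_c2 gM _; by rewrite (cardsD1 w (M q)) wM.
move=> q qJ; apply/subsetP => x; rewrite in_setD1 => /andP[xw xM].
case/and4P: (MP q qJ) => _ wM _ _.
rewrite inE; move/cliqueP: (Mcl q qJ); apply => //; by rewrite eq_sym.
Qed.


Lemma count_K (g : nat) (K : {set T}) : cliqueb K ->
  (forall w, w \notin K -> #|N w :&: K| * (g - 1) <= k) ->
  #|K| * (k + 1 - #|K|) * (g - 1) <= n * k.
Proof.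
move=> cK Hw.
have E : \sum_(w in ~: K) #|[set a in K | e w a]| = \sum_(a in K) #|[set w in ~: K | e w a]|.
  exact: dcount.
have L1 : #|K| * (k + 1 - #|K|) <= \sum_(a in K) #|[set w in ~: K | e w a]|.
  rewrite -sum_nat_const; apply: leq_sum => a aK.
  have -> : [set w in ~: K | e w a] = N a :\: K.
    by apply/setP => x; rewrite !inE esym andbC.
  have := cardsID K (N a); rewrite Hdeg => h; rewrite (cardsD1 a K) aK; apply: ar_k1 h _.
  apply: subset_leq_card.
  apply/subsetP => x; rewrite !inE => /andP[eax xK]; rewrite xK andbT.
  by apply/negP => /eqP xa; rewrite xa eirr in eax.
have L2 : \sum_(w in ~: K) #|[set a in K | e w a]| * (g - 1) <= n * k.
  apply: (@leq_trans (\sum_(w in ~: K) k)).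
    apply: leq_sum => w; rewrite inE => wK.
    have -> : [set a in K | e w a] = N w :&: K by apply/setP => x; rewrite !inE andbC.
    exact: Hw.
  by rewrite sum_nat_const leq_mul2r -Hcard max_card orbT.
apply: leq_trans L2; rewrite -big_distrl /= E leq_mul2r L1 orbT //.
Qed.


Lemma main_nat x y z : e x y -> e y z -> x != z -> ~~ e x z ->
  32 * n <= lam.+1 ^ 2 -> 4 * ((mu - 1) * k) <= lam.+1 ^ 2 -> False.
Proof.
move=> exy eyz xz nxz h32 h4.
have yxz : y \in N x :&: N z by rewrite !inE exy esym eyz.
have hmu : 1 <= mu.
  have := @dist2_mu x z [set y] y xz nxz (set11 y).
  rewrite cards1; apply; apply/subsetP => t; rewrite inE => /eqP->; exact: yxz.
have hk : lam.+1 <= k.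
  have sub : N x :&: N y \subset N y :\ x.
    apply/subsetP => t; rewrite !inE => /andP[ext eyt]; rewrite eyt andbT.
    by apply/negP => /eqP tx; rewrite tx eirr in ext.
  have E := cardsD1 x (N y); rewrite Hdeg inE esym exy in E.
  have := subset_leq_card sub; rewrite -commonE Hlam // => h.
  exact: ar_hk h E.
have h2l : 2 * lam + 3 <= k + mu.
  set A := N x :&: N y; set B := N z :&: N y.
  have cA : #|A| = lam by rewrite -commonE Hlam.
  have cB : #|B| = lam by rewrite -commonE Hlam // esym.
  have sub : A :|: B \subset (N y :\ x) :\ z.
    apply/subsetP => t; rewrite !inE => /orP[/andP[ext eyt]|/andP[ezt eyt]]; rewrite eyt andbT.
    - apply/andP; split; apply/negP => /eqP tv.
      + by rewrite -tv ext in nxz.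
      + by rewrite tv eirr in ext.
    - apply/andP; split; apply/negP => /eqP tv.
      + by rewrite tv eirr in ezt.
      + by rewrite tv esym in ezt; rewrite ezt in nxz.
  have E : k = 1 + (1 + #|(N y :\ x) :\ z|).
    rewrite -(Hdeg y) (cardsD1 x (N y)) (cardsD1 z (N y :\ x)) !inE (esym y x) exy eyz.
    by rewrite eq_sym xz.
  have hI : 1 + #|A :&: B| <= mu.
    have uI : y \notin A :&: B by rewrite !inE eirr !andbF.
    have := @dist2_mu x z (y |: (A :&: B)) y xz nxz (setU11 _ _).
    rewrite cardsU1 uI; apply; apply/subsetP => t; rewrite !inE.
    case/orP => [/eqP->|]; first by move: yxz; rewrite !inE.
    by case/andP => /andP[-> _] /andP[-> _].
  exact: ar_2l (cardsUI A B) cA cB (subset_leq_card sub) E hI.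
have [hd0 hdX] := ar_d h4 hk h2l hmu.
set d := lam.+2 - mu in hd0 hdX; set X := 2 * ((mu - 1) * (k - lam.+1)) in hdX.
pose H := X %/ d; pose g := lam.+2 - H.
have Hg : forall u v, e u v -> exists M, [/\ maxcliqueb M, u \in M, v \in M & g <= #|M|].
  move=> u v euv; have [K0 [cK0 uK vK hK]] := big_clique euv.
  have [M [mM sub]] := extend cK0.
  exists M; split => //; try exact: (subsetP sub).
  have h : lam.+2 - #|K0| <= H by rewrite leq_divRL.
  exact: ar_g h (subset_leq_card sub).
have H2 : lam + mu + 3 <= 2 * g := ar_H (leq_divM X d) hdX erefl hd0.
have [K [mK xK yK gK]] := Hg x y exy.
have cK : cliqueb K by case/andP: mK.
have xy : x != y by apply/negP => /eqP xy; rewrite xy eirr in exy.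
have Kle : #|K| <= lam.+2 := clique_le cK xK yK xy.
have hc := count_K cK (fun w wK => core Hg H2 mK gK wK).
exact: ar_final gK Kle hc h32 H2 h2l h4 hmu hk.
Qed.

End Comb.

Unset Implicit Arguments.
From mathcomp Require Import lra.
Import Order.TTheory GRing.Theory Num.Theory.
Local Open Scope ring_scope.

Theorem theorem1 (R : rcfType) (T : finType) (e : rel T) (n k lam mu : nat) :
  sub_amply_regular e n k lam mu ->
  ~ disjoint_union_of_cliques e ->
  (lam.+1)%:R <
    Num.max (4 * Num.sqrt (2 * n%:R))
            (6 / (Num.sqrt 13 - 1) * Num.sqrt (k%:R * (mu%:R - 1))) :> R.
Proof.
move=> [[esym eirr] Hcard Hdeg Hlam Hmu] Hnot.
have [x [y [z [exy eyz xz nxz]]]] :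
    exists x y z, [/\ e x y, e y z, x != z & ~~ e x z].
  case: (boolP [exists x, exists y, exists z, [&& e x y, e y z, x != z & ~~ e x z]]).
    move=> /existsP[x /existsP[y /existsP[z /and4P[? ? ? ?]]]]; by exists x, y, z.
  move=> /negP Hn; exfalso; apply: Hnot => x y z exy eyz xz.
  apply/negPn/negP => nxz; apply: Hn; apply/existsP; exists x; apply/existsP; exists y.
  apply/existsP; exists z; by rewrite exy eyz xz nxz.
have hmu : (1 <= mu)%N.
  have Hd : dist2 e x z.
    apply/and3P; split => //; apply/existsP; exists y; by rewrite exy eyz.
  apply: leq_trans (Hmu x z Hd); rewrite /common_nbrs card_gt0; apply/set0Pn.
  by exists y; rewrite !inE exy (esym z y) eyz.
rewrite lt_max; apply/negPn/negP; rewrite negb_or -!leNgt => /andP[h1 h2].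
apply: (main_nat esym eirr Hdeg Hlam Hcard Hmu exy eyz xz nxz).
- rewrite -(ler_nat R) natrM natrX.
  set s := Num.sqrt _ in h1.
  have s0 : 0 <= s := sqrtr_ge0 _.
  have s2 : s ^+ 2 = 2 * n%:R by rewrite sqr_sqrtr // mulr_ge0 // ler0n.
  have L0 : 0 <= (lam.+1)%:R :> R by rewrite ler0n.
  rewrite -[32%:R]/(32 : R).
  nra.
- rewrite -(ler_nat R) natrM natrM natrX natrB //.
  set t := Num.sqrt (k%:R * (mu%:R - 1)) in h2.
  have t0 : 0 <= t := sqrtr_ge0 _.
  have km0 : 0 <= k%:R * (mu%:R - 1) :> R.
    by rewrite mulr_ge0 ?ler0n // subr_ge0 ler1n.
  have t2 : t ^+ 2 = k%:R * (mu%:R - 1) by rewrite /t sqr_sqrtr.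
  set q := Num.sqrt (13 : R) in h2.
  have q0 : 0 <= q := sqrtr_ge0 _.
  have q2 : q ^+ 2 = 13 by rewrite sqr_sqrtr // ler0n.
  have q1 : 1 < q by nra.
  have q4 : q < 4 by nra.
  have c2 : 2 < 6 / (q - 1).
    by rewrite ltr_pdivlMr ?subr_gt0 //; lra.
  set c := 6 / (q - 1) in h2 c2.
  have L0 : 0 <= (lam.+1)%:R :> R by rewrite ler0n.
  have ct : 2 * t <= c * t by rewrite ler_wpM2r // ltW.
  have h3 : 2 * t <= (lam.+1)%:R := le_trans ct h2.
  have h4 : (2 * t) ^+ 2 <= (lam.+1)%:R ^+ 2.
    by rewrite ler_pXn2r // ?nnegrE ?mulr_ge0.
  rewrite exprMn t2 in h4; lra.
Qed.
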